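(* Let $0\le r\le n$, let $A\in\mathcal{A}_{n+1,r+1}$ have block-ends $b_1>\dots>b_{r+1}$, and fix a tiling of $\Gamma(X(A))$. If $x=b_i$ with $i<r+1$, then at the termination of the fusion-exchange algorithm applied to $A$, the northwest boundary edge of the $x$-strip carries a nonempty label.
   Context: Words and diagrams. For $0\le r\le n$ let $B_n^r$ be the set of words $X\in\{H,L,0\}^n$ with exactly $r$ letters $L$. If $X$ has $k$ letters $H$, $r$ letters $L$ and $\ell$ letters $0$, its rhombic diagram $\Gamma(X)$ is the closed region bounded by two paths of unit steps, using the directions west (horizontal), south (vertical) and southwest (diagonal: a fixed unit vector strictly between west and south), both going from a point $P$ to a point $Q$: the northwest boundary consists of $\ell$ west steps, then $r$ southwest steps, then $k$ south steps; the southeast boundary is obtained by reading $X$ left to right and taking a west step for each $0$, a southwest step for each $L$, a south step for each $H$. A tiling of $\Gamma(X)$ is a tiling by unit rhombi of three kinds: squares (horizontal and vertical edges), tall rhombi (vertical and diagonal edges), short rhombi (horizontal and diagonal edges). A west-strip (resp. north-strip, northwest-strip) is a maximal set of tiles connected through shared vertical (resp. horizontal, diagonal) edges; each runs from an edge of the southeast boundary to an edge of the northwest boundary. Each tile has two edges on its lower-right side: its east edge (vertical for squares and tall rhombi, diagonal for short rhombi) and its south edge (horizontal for squares and short rhombi, diagonal for tall rhombi); the parallel edges on its upper-left side are its west and north edges. Assemblées. An assemblée of size $(m,s)$ is a collection of $s$ nonempty, pairwise disjoint, linearly ordered sets (blocks) with union $\{1,\dots,m\}$; the last element of a block is its block-end.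 Blocks are listed in the canonical order with decreasing block-ends, and the assemblée is identified with the concatenated word. $\mathcal{A}_{m,s}$ is the set of these. For $A\in\mathcal{A}_{n+1,r+1}$ with block-ends $b_1>\dots>b_{r+1}$, a non-block-end element $x$ is an increase if $x+1$ appears to the right of $x$ in $A$, and a decrease otherwise (so $n+1$, if not a block-end, is a decrease). $X(A)\in B_n^r$ is obtained from $A$ by deleting its last letter $b_{r+1}$ and replacing each increase by $H$, each decrease by $0$ and each remaining block-end by $L$. Fusion-exchange algorithm. A label is a finite, possibly empty, set of consecutive integers; for labels $E,S$ write $E\succ S$ if both are nonempty and $\min E=\max S+1$. Given $A\in\mathcal{A}_{n+1,r+1}$ and a tiling of $\Gamma(X(A))$: initially the southeast boundary edges, in order from $P$ to $Q$, receive the singleton labels of the letters of $A$ from left to right, $b_{r+1}$ omitted. Step: choose a tile whose east and south edges are labeled, say by $E$ and $S$, and whose west and north edges are not. (R I) If $E\succ S$ and the south edge is horizontal: west edge gets $E\cup S$, north edge gets $\emptyset$, place $\alpha$ in the tile. (R II) If $S\succ E$ and the east edge is vertical: north edge gets $E\cup S$, west edge gets $\emptyset$, place $\beta$. (R III) Otherwise: west edge gets $E$, north edge gets $S$, and place $q$ if $E\ne\emptyset$ and $S\ne\emptyset$. Repeat until every edge is labeled (termination). For a letter $x\neq b_{r+1}$ of $A$, the $x$-strip is the strip containing the southeast boundary edge initially labeled $\{x\}$. *)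

(* Defs.v *)
From mathcomp Require Import all_boot.
Set Implicit Arguments. Unset Strict Implicit. Unset Printing Implicit Defensive.

Inductive letter := LH | LL | L0.

(* Order used to sort the southeast boundary into the northwest boundary
   0^l L^r H^k :  0 < L < H. *)
Definition lrank (c : letter) : nat :=
  match c with L0 => 0 | LL => 1 | LH => 2 end.

(* An assemblee of size (m,s), given as its list of blocks in canonical order
   (each block a linearly ordered list); the assemblee as a word is [flatten A]. *)
Definition assemblee (m s : nat) (A : seq (seq nat)) : Prop :=
  [/\ size A = s,
      all (fun B => B != [::]) A,
      perm_eq (flatten A) (iota 1 m)
    & sorted (fun a b => b < a) (map (last 0) A)].

Definition aword (A : seq (seq nat)) : seq nat := flatten A.

(* block-ends b_1 > ... > b_{s} (0-indexed list) *)
Definition block_ends (A : seq (seq nat)) : seq nat := map (last 0) A.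

(* X(A): delete the last letter, then block-end -> L, increase -> H,
   decrease -> 0. *)
Definition X_of (A : seq (seq nat)) : seq letter :=
  let w := aword A in
  map (fun x => if x \in block_ends A then LL
                else if x.+1 \in drop (index x w).+1 w then LH else L0)
      (take (size w).-1 w).

(* Labels: finite sets of consecutive integers, represented as lists
   (union = concatenation). *)
Definition label := seq nat.
Definition lmax (S : label) : nat := \max_(i <- S) i.
Definition lmin (E : label) : nat := foldr minn (head 0 E) E.
Definition lsucc (E S : label) : bool :=
  [&& E != [::], S != [::] & lmin E == (lmax S).+1].

(* Current path from P to Q: list of (direction letter, label) for its edges.
   A tile whose lower-right side occupies positions i (east edge) and i+1
   (south edge) is replaced by its upper-left side: position i becomes the
   north edge (direction of the south edge) and i+1 the west edge
   (direction of the east edge). Horizontal = 0, vertical = H. *)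
Definition edge := (letter * label)%type.
Definition dedge : edge := (L0, [::]).

Definition tile_out (e : letter) (E : label) (s : letter) (S : label)
  : edge * edge :=
  if lsucc E S && (if s is L0 then true else false)
  then ((s, [::]), (e, E ++ S))
  else if lsucc S E && (if e is LH then true else false)
  then ((s, E ++ S), (e, [::]))
  else ((s, S), (e, E)).

Definition step (st : seq edge) (i : nat) : seq edge :=
  let: (e, E) := nth dedge st i in
  let: (s, S0) := nth dedge st i.+1 in
  let: (nw, wt) := tile_out e E s S0 in
  set_nth dedge (set_nth dedge st i nw) i.+1 wt.

(* A tile can be placed at i iff the two edges form an inversion
   (H0 -> square, HL -> tall rhombus, L0 -> short rhombus). *)
Definition valid_step (st : seq edge) (i : nat) : bool :=
  (i.+1 < size st) && (lrank (nth dedge st i.+1).1 < lrank (nth dedge st i).1).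

Fixpoint run (st : seq edge) (sigma : seq nat) : seq edge :=
  if sigma is i :: s then run (step st i) s else st.

Fixpoint valid_run (st : seq edge) (sigma : seq nat) : bool :=
  if sigma is i :: s then valid_step st i && valid_run (step st i) s else true.

(* Position of the edge of a strip along the path: a tile at i moves the
   east edge (position i) to the west edge (position i+1) and the south
   edge (i+1) to the north edge (i). *)
Fixpoint track (p : nat) (sigma : seq nat) : nat :=
  if sigma is i :: s then
    track (if p == i then i.+1 else if p == i.+1 then i else p) s
  else p.

Definition init (A : seq (seq nat)) : seq edge :=
  let w := aword A in
  zip (X_of A) (map (fun a => [:: a]) (take (size w).-1 w)).

Definition is_nw_boundary (st : seq edge) : bool :=
  sorted (fun a b => lrank a <= lrank b) (map fst st).

(* Main.v *)
Require Import Defs.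
From mathcomp Require Import all_boot.

Lemma step_inv (st : seq edge) (i p : nat) :
  valid_step st i -> p < size st -> (nth dedge st p).1 = LL ->
  (nth dedge st p).2 != [::] ->
  let p' := if p == i then i.+1 else if p == i.+1 then i else p in
  [/\ p' < size (step st i), (nth dedge (step st i) p').1 = LL
    & (nth dedge (step st i) p').2 != [::]].
Proof.
move=> /andP[Hsz Hrk] Hp Hl Hn /=.
rewrite /step.
have Hi : i < size st by apply: ltnW.
move: Hrk Hl Hn.
case Ee: (nth dedge st i) => [e E].
case Es: (nth dedge st i.+1) => [s S] /= Hrk.
have sz : forall a b, size (set_nth dedge (set_nth dedge st i a) i.+1 b) = size st.
  move=> a b; rewrite !size_set_nth.
  by rewrite (maxn_idPr (ltnW Hsz)) (maxn_idPr Hsz).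
case: (eqVneq p i) => [Epi|Hpi].
  subst p; rewrite Ee /= => He HE; subst e.
  case: s Es Hrk => Es //= _.
  rewrite /tile_out /= andbF; case: ifP => _ /=;
  rewrite sz nth_set_nth /= eqxx /=; split => //; by move: HE; case: (E).
case: (eqVneq p i.+1) => [Epi|Hpi1].
  subst p; rewrite Es /= => He HS; subst s.
  case: e Ee Hrk => Ee //= _.
  rewrite /tile_out /= andbF; case: ifP => _ /=;
  rewrite sz nth_set_nth /= (ltn_eqF (ltnSn i)) nth_set_nth /= eqxx /=;
  split => //; by move: HS; case: (S) => //; case: (E).
move=> Hl Hn.
case: (tile_out e E s S) => a b.
rewrite sz !nth_set_nth /=.
rewrite (negbTE Hpi1) nth_set_nth /= (negbTE Hpi).
by split.
Qed.

Lemma run_inv (sigma : seq nat) (st : seq edge) (p : nat) :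
  valid_run st sigma -> p < size st -> (nth dedge st p).1 = LL ->
  (nth dedge st p).2 != [::] ->
  (nth dedge (run st sigma) (track p sigma)).2 != [::].
Proof.
elim: sigma st p => [|i s IH] st p //=.
move=> /andP[Hv Hr] Hp Hl Hn.
have [H1 H2 H3] := @step_inv st i p Hv Hp Hl Hn.
exact: IH.
Qed.

Lemma last_flatten (A : seq (seq nat)) :
  all (fun B => B != [::]) A -> last 0 (aword A) = last 0 (block_ends A).
Proof.
case/lastP: A => [//|A' B].
rewrite /aword /block_ends flatten_rcons map_rcons last_rcons last_cat all_rcons.
by case: B => // b B _ /=.
Qed.

Theorem lemma3p6 (n r : nat) (A : seq (seq nat)) (sigma : seq nat) (i : nat) :
  r <= n ->
  assemblee n.+1 r.+1 A ->
  valid_run (init A) sigma ->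
  is_nw_boundary (run (init A) sigma) ->
  i < r ->
  let x := nth 0 (block_ends A) i in
  (nth dedge (run (init A) sigma) (track (index x (aword A)) sigma)).2 != [::].
Proof.
move=> _ [Hsize Hne Hperm Hsort] Hv _ Hir /=.
set x := nth 0 (block_ends A) i.
set w := aword A.
have Huw : uniq w by rewrite (perm_uniq Hperm) iota_uniq.
have Hube : uniq (block_ends A).
  apply: (sorted_uniq (leT := fun a b => b < a)) => //.
    by move=> a b c /= H1 H2; apply: ltn_trans H2 H1.
  by move=> a /=; rewrite ltnn.
have Hszbe : size (block_ends A) = r.+1 by rewrite size_map.
have Hxbe : x \in block_ends A by rewrite mem_nth // Hszbe ltnS ltnW.
have Hxw : x \in w.
  move: Hxbe => /mapP[B HB ->].
  apply/flattenP; exists B => //.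
  move/allP: Hne => /(_ B HB).
  by case: B {HB} => // b B _; apply: mem_last.
have Hlast : last 0 w = last 0 (block_ends A).
  by apply: last_flatten.
have Hxl : x != last 0 w.
  rewrite Hlast -nth_last Hszbe /= /x nth_uniq // ?Hszbe //.
    by rewrite neq_ltn Hir.
  exact: ltn_trans Hir _.
have Hszw : size w = n.+1 by rewrite (perm_size Hperm) size_iota.
have Hidx : index x w < (size w).-1.
  have H1 : index x w < size w by rewrite index_mem.
  rewrite ltn_neqAle -ltnS prednK ?H1 ?andbT //; last by rewrite Hszw.
  apply/eqP => He; move: Hxl; rewrite -nth_last -He nth_index //.
  by rewrite eqxx.
have Hszi : size (X_of A) = size (map (fun a => [:: a]) (take (size w).-1 w)).
  by rewrite /X_of !size_map.
have Hn1 : (size w).-1 < size w by rewrite Hszw.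
have Hst : index x w < size (take (size w).-1 w) by rewrite size_take Hn1.
apply: run_inv => //.
- by rewrite /init size_zip -Hszi minnn /X_of size_map.
- rewrite /init (nth_zip _ _ _ Hszi) /= /X_of (nth_map 0) //.
  by rewrite -/w nth_take // nth_index // Hxbe.
- by rewrite /init (nth_zip _ _ _ Hszi) /= (nth_map 0).
Qed.
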